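(* Let $\gamma$ be a quasiorder on a set $A$ and let $\alpha$ be a half-space on $A$ with $\gamma\subseteq\alpha$. Then there exists a half-space $\tau$ on $A$ such that $\gamma\subseteq\tau\subseteq\alpha$ and $\tau\cap\tau^{-1}=\gamma\cap\gamma^{-1}$.
   Context: A quasiorder on $A$ is a reflexive and transitive relation; $\Delta_A=\{(a,a)\mid a\in A\}$. A quasiorder $\alpha$ on $A$ is a half-space if there is a quasiorder $\beta$ on $A$ with $\alpha\cup\beta=A\times A$ and $\alpha\cap\beta=\Delta_A$. *)

(* Defs.v *)
Definition quasiorder {A : Type} (r : A -> A -> Prop) : Prop :=
  (forall a, r a a) /\ (forall a b c, r a b -> r b c -> r a c).

Definition half_space {A : Type} (alpha : A -> A -> Prop) : Prop :=
  quasiorder alpha /\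
  exists beta : A -> A -> Prop,
    quasiorder beta /\
    (forall a b, alpha a b \/ beta a b) /\
    (forall a b, (alpha a b /\ beta a b) <-> a = b).

(* Main.v *)
Require Import Defs.
From mathcomp Require Import all_boot.
From mathcomp Require Import boolp classical_sets.
Set Implicit Arguments.
Unset Strict Implicit.
Unset Printing Implicit Defensive.
Local Open Scope classical_set_scope.

Section S.
Variables (A : Type) (gamma alpha : A -> A -> Prop).

Definition good (r : A -> A -> Prop) :=
  quasiorder r /\ (forall a b, r a b -> alpha a b) /\
  (forall a b, r a b -> r b a -> gamma a b).

Definition relof (B : set (A * A)) := fun a b => gamma a b \/ B (a, b).

Lemma extend (B : set (A * A)) u v :
  quasiorder gamma -> quasiorder alpha -> good (relof B) -> alpha u v -> ~ relof B v u ->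
  good (relof (fun p => B p \/ (relof B p.1 u /\ relof B v p.2))).
Proof.
move=> [gr gt] [_ at_] [[tr tt] [ta ts]] auv ntvu.
have ext x y : relof (fun p => B p \/ (relof B p.1 u /\ relof B v p.2)) x y <->
  relof B x y \/ (relof B x u /\ relof B v y).
  rewrite /relof /=; split.
  - by case=> [?|[?|?]]; [left; left|left; right|right].
  - by case=> [[?|?]|?]; [left|right; left|right; right].
split; [split|split].
- by move=> a; apply/ext; left; apply: tr.
- move=> a b c /ext [ab|[au vb]] /ext [bc|[bu vc]]; apply/ext.
  + by left; apply: tt ab bc.
  + by right; split => //; apply: tt ab bu.
  + by right; split => //; apply: tt vb bc.
  + by right; split.
- move=> a b /ext [|[au vb]]; first by apply: ta.
  by apply: at_ (ta _ _ au) (at_ _ _ _ auv (ta _ _ vb)).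
- move=> a b /ext [ab|[au vb]] /ext [ba|[bu va]].
  + by apply: ts.
  + by exfalso; apply: ntvu; apply: tt va (tt _ _ _ ab bu).
  + by exfalso; apply: ntvu; apply: tt vb (tt _ _ _ ba au).
  + by exfalso; apply: ntvu; apply: tt vb bu.
Qed.
End S.

Theorem proposition2p4 (A : Type) (gamma alpha : A -> A -> Prop) :
  quasiorder gamma ->
  half_space alpha ->
  (forall a b, gamma a b -> alpha a b) ->
  exists tau : A -> A -> Prop,
    half_space tau /\
    (forall a b, gamma a b -> tau a b) /\
    (forall a b, tau a b -> alpha a b) /\
    (forall a b, (tau a b /\ tau b a) <-> (gamma a b /\ gamma b a)).
Proof.
move=> gq hs ga.
have aq := hs.1.
have [gr gt] := gq.
have [A0 [PA0 maxA0]] : exists A0, good gamma alpha (relof gamma A0) /\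
    forall B, A0 `<` B -> ~ good gamma alpha (relof gamma B).
  apply: Zorn_bigcup => F FP Ftot.
  have [F0|/eqP/set0P [X0 FX0]] := pselect (F = set0).
    rewrite F0 bigcup_set0; split; [split|split].
    - by move=> a; left.
    - by move=> a b c [ab|//] [bc|//]; left; apply: gt ab bc.
    - by move=> a b [ab|//]; apply: ga.
    - by move=> a b [ab|//].
  have mem a b : relof gamma (\bigcup_(X in F) X) a b -> exists X, F X /\ relof gamma X a b.
    case=> [ab|[X FX Xab]]; first by exists X0; split=> //; left.
    by exists X; split=> //; right.
  have inU X a b : F X -> relof gamma X a b -> relof gamma (\bigcup_(X in F) X) a b.
    by move=> FX [?|?]; [left|right; exists X].
  split; [split|split].
  - by move=> a; left.
  - move=> a b c /mem [X [FX ab]] /mem [Y [FY bc]].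
    have [XY|YX] := Ftot X Y FX FY.
    + have [[_ t] _] := FP Y FY; apply: (inU Y) => //; apply: t _ bc.
      by case: ab => [?|?]; [left|right; apply: XY].
    + have [[_ t] _] := FP X FX; apply: (inU X) => //; apply: t ab _.
      by case: bc => [?|?]; [left|right; apply: YX].
  - by move=> a b /mem [X [FX ab]]; have [_ [h _]] := FP X FX; apply: h.
  - move=> a b /mem [X [FX ab]] /mem [Y [FY ba]].
    have [XY|YX] := Ftot X Y FX FY.
    + have [_ [_ h]] := FP Y FY; apply: h => //.
      by case: ab => [?|?]; [left|right; apply: XY].
    + have [_ [_ h]] := FP X FX; apply: h => //.
      by case: ba => [?|?]; [left|right; apply: YX].
set tau := relof gamma A0.
have [[tr tt] [ta ts]] := PA0.
have key u v : alpha u v -> ~ tau v u -> tau u v.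
  move=> auv nvu; apply/not_notP => nuv.
  apply: (maxA0 (fun p => A0 p \/ (tau p.1 u /\ tau v p.2))).
    split; first by move=> p; left.
    move=> /(_ (u, v)) h.
    by apply: nuv; right; apply: h; right; split; apply: tr.
  exact: (extend gq aq PA0 auv nvu).
have [_ [bt [[_ btt] [un int]]]] := hs.
exists tau; split; [split|split].
- by split.
- exists (fun a b => a = b \/ ~ tau a b); split; [split|split].
  + by move=> a; left.
  + move=> x y z [exy|nxy]; first by subst y.
    case=> [eyz|nyz]; first by subst z; right.
    have [->|nxz] := pselect (x = z); first by left.
    right=> txz.
    have [xy|nxy'] := pselect (alpha x y).
      have [yx|nyx] := pselect (tau y x); last by apply: nxy; apply: key.
      by apply: nyz; apply: tt yx txz.
    have [yz|nyz'] := pselect (alpha y z).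
      have [zy|nzy] := pselect (tau z y); last by apply: nyz; apply: key.
      by apply: nxy; apply: tt txz zy.
    apply: nxz; apply/int; split; first by apply: ta.
    have bxy : bt x y by case: (un x y).
    have byz : bt y z by case: (un y z).
    by apply: btt bxy byz.
  + by move=> a b; have [?|?] := pselect (tau a b); [left|right; right].
  + move=> a b; split; first by case=> ? [//|].
    by move=> <-; split; [apply: tr|left].
- by move=> a b ?; left.
- split; first exact: ta.
  move=> a b; split; first by case=> ab ba; split; apply: ts.
  by case=> ab ba; split; left.
Qed.
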